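(* Let $\epsilon\in(0,1)$ and $\mathcal{Z}^{(1)},\dots,\mathcal{Z}^{(p)}\in\mathbb{C}^{n_1\times\cdots\times n_d}$. Set $\mathcal{Z}^{(0,t)}:=\mathcal{Z}^{(t)}$ for $t\in[p]$. Inductively for $j=1,\dots,d$: let $\mathbf{A}_j\in\mathbb{C}^{m_j\times n_j}$ be an $(\epsilon/(ed))$-JL embedding into $\mathbb{C}^{m_j}$ of the set $\mathcal{S}_j$ consisting of all mode-$j$ fibers of all the tensors $\mathcal{Z}^{(j-1,t)}\in\mathbb{C}^{m_1\times\cdots\times m_{j-1}\times n_j\times\cdots\times n_d}$, $t\in[p]$ (i.e., all vectors $\mathcal{Z}^{(j-1,t)}_{i_1,\dots,i_{j-1},:,i_{j+1},\dots,i_d}\in\mathbb{C}^{n_j}$ with $i_\ell\in[m_\ell]$ for $\ell<j$ and $i_\ell\in[n_\ell]$ for $\ell>j$), and then set $\mathcal{Z}^{(j,t)}:=\mathcal{Z}^{(j-1,t)}\times_j\mathbf{A}_j$. Then for all $t\in[p]$, $$\big|\|\mathcal{Z}^{(t)}\|^2-\|\mathcal{Z}^{(t)}\times_1\mathbf{A}_1\cdots\times_d\mathbf{A}_d\|^2\big|\le\epsilon\|\mathcal{Z}^{(t)}\|^2 .$$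
   Context: $\|\cdot\|$ is the Euclidean norm of a tensor (square root of the sum of squared absolute values of entries); $e$ is Euler's number. The $j$-mode product is $(\mathcal{Z}\times_j\mathbf{U})_{i_1,\dots,\ell,\dots,i_d}=\sum_{i_j}\mathcal{Z}_{i_1,\dots,i_j,\dots,i_d}\mathbf{U}_{\ell,i_j}$. A mode-$j$ fiber of a tensor is the vector obtained by fixing all indices except the $j$-th. A matrix $\mathbf{A}$ is an $\epsilon$-JL embedding of $S$ if $\|\mathbf{A}x\|_2^2=(1+\epsilon_x)\|x\|_2^2$ with $\epsilon_x\in(-\epsilon,\epsilon)$ for all $x\in S$. *)

(* Defs.v *)
From HB Require Import structures.
From mathcomp Require Import all_boot all_order all_algebra.
From mathcomp Require Import complex.
From mathcomp Require Import reals sequences.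
Set Implicit Arguments. Unset Strict Implicit. Unset Printing Implicit Defensive.
Import Order.TTheory GRing.Theory Num.Theory.
Local Open Scope ring_scope.

Section Defs.
Variable R : realType.
Local Notation C := (R[i]).

Definition abs2 (z : C) : R := complex.Re z ^+ 2 + complex.Im z ^+ 2.

Definition vnorm2 n (x : 'cV[C]_n) : R := \sum_(i < n) abs2 (x i 0).

Definition JL_embedding (eps : R) m n (A : 'M[C]_(m, n)) (S : 'cV[C]_n -> Prop) :=
  forall x, S x -> exists epsx : R,
    -eps < epsx < eps /\ vnorm2 (A *m x) = (1 + epsx) * vnorm2 x.

(* An order-d tensor: a map from multi-indices (0-based, ('I_d -> nat)) to C;
   only the entries inside the dimension box are ever used. *)
Definition tensor (d : nat) := ('I_d -> nat) -> C.

Definition tnorm2 d (dims : 'I_d -> nat) (Z : tensor d) : R :=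
  \sum_(i : {dffun forall l : 'I_d, 'I_(dims l)}) abs2 (Z (fun l => nat_of_ord (i l))).

Definition setidx d (i : 'I_d -> nat) (j : 'I_d) (k : nat) : 'I_d -> nat :=
  fun l => if l == j then k else i l.

(* entry (a,b) of a matrix, addressed by natural numbers (0 outside range) *)
Definition mxentry m n (A : 'M[C]_(m, n)) (a b : nat) : C :=
  match insub a, insub b with
  | Some a', Some b' => A a' b'
  | _, _ => 0
  end.

Definition modeprod d (Z : tensor d) (j : 'I_d) m n (U : 'M[C]_(m, n)) : tensor d :=
  fun i => \sum_(k < n) Z (setidx i j k) * mxentry U (i j) k.

(* stage k : Z x_1 A_1 ... x_k A_k  (modes 0..k-1 in 0-based numbering) *)
Fixpoint stage d (n m : 'I_d -> nat) (A : forall j : 'I_d, 'M[C]_(m j, n j))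
    (k : nat) (Z : tensor d) : tensor d :=
  match k with
  | 0 => Z
  | k'.+1 =>
      match (insub k' : option 'I_d) with
      | Some j => modeprod (stage A k' Z) j (A j)
      | None => stage A k' Z
      end
  end.

Definition stage_dims d (n m : 'I_d -> nat) (k : nat) : 'I_d -> nat :=
  fun l => if ((l : nat) < k)%N then m l else n l.

Definition fibers d (n m : 'I_d -> nat) (A : forall j : 'I_d, 'M[C]_(m j, n j))
    p (Z : 'I_p -> tensor d) (j : 'I_d) : 'cV[C]_(n j) -> Prop :=
  fun x => exists t : 'I_p, exists i : 'I_d -> nat,
    (forall l : 'I_d, l != j -> (i l < stage_dims n m j l)%N) /\
    x = \col_(k < n j) stage A j (Z t) (setidx i j k).

End Defs.
Arguments fibers {R d n m} A {p} Z j _.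

(* Main.v *)
Require Import Defs.
From HB Require Import structures.
From mathcomp Require Import all_boot all_order all_algebra.
From mathcomp Require Import complex.
From mathcomp Require Import reals sequences.
From mathcomp Require Import ring lra exp.
From Stdlib Require Import FunctionalExtensionality.
Import Order.TTheory GRing.Theory Num.Theory.
Local Open Scope ring_scope.

Section S.
Variable R : realType.

Lemma step1 d (D : 'I_d -> nat) N (hD : forall l, (D l <= N)%N) (G : ('I_d -> nat) -> R) :
 \sum_(i : {dffun forall l : 'I_d, 'I_(D l)}) G (fun l => nat_of_ord (i l)) =
 \sum_(f : {ffun 'I_d -> 'I_N.+1} | [forall l, (f l < D l)%N]) G (fun l => nat_of_ord (f l)).
Proof.
pose h (i : {dffun forall l : 'I_d, 'I_(D l)}) : {ffun 'I_d -> 'I_N.+1} :=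
  [ffun l => inord (i l)].
have hv i l : nat_of_ord (h i l) = i l.
  by rewrite ffunE inordK // ltnS (leq_trans _ (hD l)) // ltnW.
transitivity (\sum_(i : {dffun forall l : 'I_d, 'I_(D l)}) G (fun l => nat_of_ord (h i l))).
  apply: eq_bigr => i _; congr G; apply: functional_extensionality => l; by rewrite hv.
have -> : \sum_(f : {ffun 'I_d -> 'I_N.+1} | [forall l, (f l < D l)%N]) G (fun l => nat_of_ord (f l))
   = \sum_(f <- [seq f <- index_enum {ffun 'I_d -> 'I_N.+1} | [forall l, ((f : {ffun 'I_d -> 'I_N.+1}) l < D l)%N]])
        G (fun l => nat_of_ord ((f : {ffun 'I_d -> 'I_N.+1}) l)) by rewrite big_filter.
rewrite (perm_big (map h (index_enum _))) ?big_map //.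
have hinj : injective h.
  move=> i1 i2 E; apply/ffunP => l; apply: val_inj; by rewrite /= -!hv E.
apply: uniq_perm.
- by rewrite filter_uniq // index_enum_uniq.
- by rewrite map_inj_uniq // index_enum_uniq.
move=> f; rewrite mem_filter mem_index_enum andbT.
apply/idP/mapP.
  move=> /forallP Pf.
  exists (finfun (fun l => Ordinal (Pf l)) : {dffun forall l : 'I_d, 'I_(D l)}).
    by rewrite mem_index_enum.
  apply/ffunP => l; apply: val_inj; by rewrite /= hv ffunE.
move=> [i _ ->]; apply/forallP => l; by rewrite hv ltn_ord.
Qed.


Lemma step2 d (D : 'I_d -> nat) N (hD : forall l, (D l <= N)%N) (j : 'I_d)
  (G : ('I_d -> nat) -> R) :
 \sum_(f : {ffun 'I_d -> 'I_N.+1} | [forall l, (f l < D l)%N]) G (fun l => nat_of_ord (f l)) =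
 \sum_(g : {ffun 'I_d -> 'I_N.+1} | (g j == ord0) && [forall l, (l != j) ==> (g l < D l)%N])
    \sum_(k < D j) G (setidx (fun l => nat_of_ord (g l)) j k).
Proof.
pose z (f : {ffun 'I_d -> 'I_N.+1}) : {ffun 'I_d -> 'I_N.+1} :=
  [ffun l => if l == j then ord0 else f l].
rewrite (partition_big z (fun g : {ffun 'I_d -> 'I_N.+1} =>
   (g j == ord0) && [forall l, (l != j) ==> (g l < D l)%N])); last first.
  move=> f /forallP Pf; rewrite ffunE eqxx /=; apply/forallP => l.
  rewrite ffunE; case: (l == j) => //=; exact: Pf.
apply: eq_bigr => g /andP[/eqP g0 /forallP gQ].
pose u (k : 'I_N.+1) : {ffun 'I_d -> 'I_N.+1} := [ffun l => if l == j then k else g l].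
rewrite (reindex_onto u (fun f => f j)); last first.
  move=> f /andP[_ /eqP zf]; apply/ffunP => l; rewrite !ffunE -zf ffunE.
  by case: (altP (l =P j)) => [->|].
rewrite (big_ord_widen N.+1 (fun k => G (setidx (fun l => nat_of_ord (g l)) j k))); last first.
  exact: leqW (hD j).
apply: eq_big => k.
  rewrite ffunE eqxx eqxx andbT.
  have -> : z (u k) == g.
    apply/eqP/ffunP => l; rewrite !ffunE; case: (altP (l =P j)) => [->|] //; by rewrite g0.
  rewrite andbT; apply/forallP/idP.
    by move=> /(_ j); rewrite ffunE eqxx.
  move=> kD l; rewrite ffunE; case: (altP (l =P j)) => [->|ne] //.
  by have := gQ l; rewrite ne.
move=> _; congr G; apply: functional_extensionality => l.
by rewrite ffunE /setidx; case: (l == j).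
Qed.


Arguments step1 {d D N} hD G.
Arguments step2 {d D N} hD j G.

Lemma stepW d p (n m : 'I_d -> nat) (A : forall j : 'I_d, 'M[R[i]]_(m j, n j))
  (Z : 'I_p -> tensor R d) (del : R)
  (hJL : forall j : 'I_d, JL_embedding del (A j) (fibers A Z j)) (t : 'I_p) k
  (hk : (k < d)%N) :
  `| tnorm2 (stage_dims n m k.+1) (stage A k.+1 (Z t))
     - tnorm2 (stage_dims n m k) (stage A k (Z t)) |
  <= del * tnorm2 (stage_dims n m k) (stage A k (Z t)).
Proof.
pose j : 'I_d := Ordinal hk.
pose N := (\max_(l : 'I_d) (n l + m l))%N.
have hD k' l : (stage_dims n m k' l <= N)%N.
  rewrite /stage_dims; apply: leq_trans (leq_bigmax (F := fun l => (n l + m l)%N) l).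
  by case: ifP => _; [exact: leq_addl | exact: leq_addr].
rewrite /tnorm2 (step1 (hD k.+1) (fun f => abs2 (stage A k.+1 (Z t) f))) (step2 (hD k.+1) j (fun f => abs2 (stage A k.+1 (Z t) f))).
rewrite (step1 (hD k) (fun f => abs2 (stage A k (Z t) f))) (step2 (hD k) j (fun f => abs2 (stage A k (Z t) f))).
have eqP' : forall g : {ffun 'I_d -> 'I_N.+1},
   [forall l, (l != j) ==> (g l < stage_dims n m k.+1 l)%N]
   = [forall l, (l != j) ==> (g l < stage_dims n m k l)%N].
  move=> g; apply: eq_forallb => l; case: (altP (l =P j)) => //= ne.
  have hlk : ((nat_of_ord l) < k.+1)%N = (nat_of_ord l < k)%N.
    rewrite ltnS leq_eqVlt.
    have -> : (nat_of_ord l == k) = false.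
      by apply/negbTE; apply: contra ne => /eqP e; apply/eqP/val_inj.
    done.
  by rewrite /stage_dims hlk.
under eq_bigl => g do rewrite eqP'.
rewrite -sumrB; apply: le_trans (ler_norm_sum _ _ _) _; rewrite mulr_sumr.
apply: ler_sum => g /andP[_ /forallP gQ].
set ig := fun l => nat_of_ord (g l).
have e0 : stage_dims n m k j = n j by rewrite /stage_dims ltnn.
have e1 : stage_dims n m k.+1 j = m j by rewrite /stage_dims ltnSn.
rewrite e0 e1.
pose x := \col_(kk < n j) stage A k (Z t) (setidx ig j kk).
have Sx : fibers A Z j x.
  exists t, ig; split => // l ne; have := gQ l; by rewrite ne.
have [ex [hex hx]] := hJL j x Sx.
have vx : vnorm2 x = \sum_(kk < n j) abs2 (stage A k (Z t) (setidx ig j kk)).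
  by apply: eq_bigr => kk _; rewrite mxE.
have vAx : vnorm2 (A j *m x) = \sum_(a < m j) abs2 (stage A k.+1 (Z t) (setidx ig j a)).
  apply: eq_bigr => a _; congr abs2; rewrite /= (@insubT nat (fun x => (x < d)%N) 'I_d k hk) /modeprod mxE.
  apply: eq_bigr => kk _; rewrite mxE mulrC; change (Sub k hk : 'I_d) with j; congr (_ * _).
    congr (stage A k (Z t)); apply: functional_extensionality => l.
    by rewrite /setidx; case: (l == j).
  rewrite /mxentry /setidx eqxx !valK //.
rewrite -vx -vAx hx.
have v0 : 0 <= vnorm2 x.
  by apply: sumr_ge0 => i _; rewrite /abs2 addr_ge0 // sqr_ge0.
rewrite mulrDl mul1r addrAC subrr add0r normrM (ger0_norm v0) ler_wpM2r //.
rewrite ler_norml; apply/andP; split; apply: ltW; by case/andP: hex.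
Qed.


Lemma bern (x : R) k : 0 <= x <= 1 -> 1 - k%:R * x <= (1 - x) ^+ k.
Proof.
move=> /andP[x0 x1]; elim: k => [|k IH]; first by rewrite mul0r subr0 expr0.
have y0 : 0 <= (1 - x) ^+ k by apply: exprn_ge0; lra.
have y1 : (1 - x) ^+ k <= 1 by apply: exprn_ile1; lra.
rewrite exprS -natr1; nra.
Qed.

Lemma numbnd (eps c : R) (d : nat) : 0 < eps < 1 -> 2 <= c ->
  let del := eps / (c * d%:R) in
  [/\ 0 <= del, del <= 1, 1 - eps <= (1 - del) ^+ d & (1 + del) ^+ d <= 1 + eps].
Proof.
move=> /andP[e0 e1] c2 del.
case: d @del => [|d'] del.
  rewrite /del mulr0 invr0 mulr0 !expr0; split => //; lra.
set dR := (d'.+1)%:R : R.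
have dR1 : 1 <= dR by rewrite /dR ler1n.
set y := eps / c.
have hy : dR * del = y by rewrite /del /y; field; apply/andP; split; lra.
have yc : y * c = eps by rewrite /y; field; lra.
have del0 : 0 <= del by rewrite /del divr_ge0 //; [lra | apply: mulr_ge0; lra].
have y0 : 0 <= y by nra.
have y2 : 2 * y <= eps by nra.
have dely : del <= y by nra.
have Bd : 1 - y <= (1 - del) ^+ d'.+1 by rewrite -hy; apply: bern; lra.
have P0 : 0 <= (1 + del) ^+ d'.+1 by apply: exprn_ge0; lra.
have Q : (1 + del) ^+ d'.+1 * (1 - del) ^+ d'.+1 <= 1.
  by rewrite -exprMn; apply: exprn_ile1; nra.
split => //; try lra.
have : (1 + del) ^+ d'.+1 * (1 - y) <= 1.
  apply: le_trans Q; apply: ler_wpM2l => //.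
nra.
Qed.

End S.

Arguments stepW {R d p n m} A Z del hJL t k hk.

Theorem lemma12 (R : realType) (d p : nat) (n m : 'I_d -> nat) (eps : R)
  (heps : 0 < eps < 1)
  (Z : 'I_p -> tensor R d)
  (A : forall j : 'I_d, 'M[R[i]]_(m j, n j))
  (hJL : forall j : 'I_d,
     JL_embedding (eps / (expR 1 * d%:R)) (A j) (fibers A Z j)) :
  forall t : 'I_p,
    `| tnorm2 n (Z t) - tnorm2 m (stage A d (Z t)) | <= eps * tnorm2 n (Z t).
Proof.
move=> t.
have c2 : 2 <= expR 1 :> R by have := expR_ge1Dx (1 : R); lra.
have [d0 d1 Bl Bu] := @numbnd R eps (expR 1) d heps c2.
set del := eps / (expR 1 * d%:R) in hJL d0 d1 Bl Bu.
pose W k := tnorm2 (stage_dims n m k) (stage A k (Z t)).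
have W0 : W 0%N = tnorm2 n (Z t).
  rewrite /W; have -> : stage_dims n m 0 = n by apply: functional_extensionality.
  done.
have Wd : W d = tnorm2 m (stage A d (Z t)).
  rewrite /W; have -> : stage_dims n m d = m.
    by apply: functional_extensionality => l; rewrite /stage_dims ltn_ord.
  done.
have Wge0 k : 0 <= W k.
  by apply: sumr_ge0 => i _; rewrite /abs2 addr_ge0 // sqr_ge0.
have bnd : forall k, (k <= d)%N ->
    (1 - del) ^+ k * W 0%N <= W k <= (1 + del) ^+ k * W 0%N.
  elim => [|k IH] hk; first by rewrite expr0 !mul1r lexx.
  have := stepW A Z del hJL t k hk; rewrite -/(W k.+1) -/(W k) ler_norml => /andP[h1 h2].
  have /andP[IHl IHu] := IH (ltnW hk).
  have a1 := ler_wpM2l (_ : 0 <= 1 - del) IHl.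
  have a2 := ler_wpM2l (_ : 0 <= 1 + del) IHu.
  rewrite !exprS -!mulrA; apply/andP; split.
    apply: le_trans (a1 _) _; first lra. nra.
  apply: le_trans (a2 _); first lra. nra.
have /andP[L U] := bnd d (leqnn d).
have b1 : (1 - eps) * W 0%N <= (1 - del) ^+ d * W 0%N by apply: ler_wpM2r.
have b2 : (1 + del) ^+ d * W 0%N <= (1 + eps) * W 0%N by apply: ler_wpM2r.
rewrite -W0 -Wd ler_norml; apply/andP; split; nra.
Qed.
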